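(* Let $D$ be an infinite commutative unital integral domain. The $D$-module $D\langle X\rangle/I$ is spanned by the images of the monomials in $B$.
   Context: Let $Y=\{y_1,y_2,\dots\}$ and $Z=\{z_1,z_2,\dots\}$ be disjoint countable sets of variables, $X=Y\cup Z$, and $D\langle X\rangle$ the free unital associative $D$-algebra on $X$, $\mathbb{Z}_2$-graded with the $y_i$ even and the $z_i$ odd. Let $L\langle X\rangle$ be the Lie subalgebra of $D\langle X\rangle$ (bracket $[a,b]=ab-ba$) generated by $X$, with induced grading $L\langle X\rangle^{(0)}\oplus L\langle X\rangle^{(1)}$. An ideal of weak graded identities is a two-sided ideal $J$ of $D\langle X\rangle$ closed under every algebra endomorphism of $D\langle X\rangle$ mapping each $y_i$ into $L\langle X\rangle^{(0)}$ and each $z_i$ into $L\langle X\rangle^{(1)}$; the ideal of weak graded identities generated by a set of polynomials is the smallest such ideal containing it. Let $I$ be the ideal of weak graded identities generated by $y_1y_2-y_2y_1$, $z_1z_2z_3-z_3z_2z_1$ and $y_1z_1+z_1y_1$. Let $B$ be the set of monomials of the forms $y_{a_1}\cdots y_{a_k}$ ($k\ge0$, $a_1\le\dots\le a_k$; $k=0$ gives $1$) and $y_{a_1}\cdots y_{a_k}z_{c_1}z_{d_1}z_{c_2}z_{d_2}\cdots z_{c_m}z_{d_m}$ or $y_{a_1}\cdots y_{a_k}z_{c_1}z_{d_1}\cdots z_{d_{m-1}}z_{c_m}$ (the last odd variable $z_{d_m}$ may be omitted), where $k\ge0$, $m\ge1$, $a_1\le\dots\le a_k$, $c_1\le\dots\le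 c_m$, and the $d_j$ present are nondecreasing. *)

(* Defs.v *)
(* The free unital associative algebra D<X> is the monoid
   algebra {malg D[{fmonom V}]} (multinomials/monalg) over the free monoid
   {fmonom V} on the variable set V = nat + nat:
     inl i  stands for the even variable  y_(i+1),
     inr i  stands for the odd  variable  z_(i+1). *)
From HB Require Import structures.
From mathcomp Require Import all_boot all_order all_algebra.
From mathcomp Require Import monalg.
Set Implicit Arguments. Unset Strict Implicit. Unset Printing Implicit Defensive.
Import Order.TTheory GRing.Theory Num.Theory.
Local Open Scope ring_scope.

Definition var_t : choiceType := (nat + nat)%type.

Definition FA (D : idomainType) := {malg D[{fmonom var_t}]}.

Definition mon (D : idomainType) (m : {fmonom var_t}) : FA D := << m >>.

Definition xv (D : idomainType) (v : var_t) : FA D := mon D (fmu v).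
Definition yv (D : idomainType) (i : nat) : FA D := xv D (inl i).
Definition zv (D : idomainType) (i : nat) : FA D := xv D (inr i).

Definition lieb (D : idomainType) (a b : FA D) : FA D := a * b - b * a.

Inductive lieGen (D : idomainType) : FA D -> Prop :=
  | LG_var v : lieGen (xv D v)
  | LG_zero : lieGen 0
  | LG_add a b : lieGen a -> lieGen b -> lieGen (a + b)
  | LG_scale (c : D) a : lieGen a -> lieGen (c *: a)
  | LG_br a b : lieGen a -> lieGen b -> lieGen (lieb a b).

Definition is_odd_var (v : var_t) : bool := if v is inr _ then true else false.
Definition zdeg (m : {fmonom var_t}) : nat := count is_odd_var (m : seq var_t).

Definition homog (D : idomainType) (b : bool) (p : FA D) : Prop :=
  forall m : {fmonom var_t}, mcoeff m p != 0 -> odd (zdeg m) = b.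

Definition L0 (D : idomainType) (p : FA D) : Prop := lieGen p /\ homog false p.
Definition L1 (D : idomainType) (p : FA D) : Prop := lieGen p /\ homog true p.

Definition two_sided_ideal (D : idomainType) (J : FA D -> Prop) : Prop :=
  [/\ J 0,
      (forall a b, J a -> J b -> J (a - b)),
      (forall a b, J b -> J (a * b)) &
      (forall a b, J a -> J (a * b))].

Definition weak_graded_ideal (D : idomainType) (J : FA D -> Prop) : Prop :=
  two_sided_ideal J /\
  forall phi : {lrmorphism FA D -> FA D},
    (forall i, L0 (phi (yv D i))) -> (forall i, L1 (phi (zv D i))) ->
    forall p, J p -> J (phi p).

Definition wgi_gen (D : idomainType) (S : FA D -> Prop) (p : FA D) : Prop :=
  forall J, weak_graded_ideal J -> (forall q, S q -> J q) -> J p.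

Definition gensI (D : idomainType) (q : FA D) : Prop :=
  [\/ q = yv D 0 * yv D 1 - yv D 1 * yv D 0,
      q = zv D 0 * zv D 1 * zv D 2 - zv D 2 * zv D 1 * zv D 0 |
      q = yv D 0 * zv D 0 + zv D 0 * yv D 0].

Definition Iid (D : idomainType) : FA D -> Prop := wgi_gen (@gensI D).

Fixpoint evens (T : Type) (s : seq T) : seq T :=
  match s with [::] => [::] | x :: t => x :: odds t end
with odds (T : Type) (s : seq T) : seq T :=
  match s with [::] => [::] | _ :: t => evens t end.

(* the set B: y_(a1)...y_(ak) z_(c1) z_(d1) z_(c2) z_(d2) ... (last z_(dm)
   possibly omitted), a, c, d nondecreasing; w = [::] gives the pure y-part *)
Definition inB (m : {fmonom var_t}) : Prop :=
  exists (a w : seq nat),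
    (m : seq var_t) = map inl a ++ map inr w /\
    [/\ sorted leq a, sorted leq (evens w) & sorted leq (odds w)].

(* Main.v *)
Require Import Defs.
From HB Require Import structures.
From mathcomp Require Import all_boot all_order all_algebra.
From mathcomp Require Import monalg.
Import GRing.Theory.

Lemma perm_gen (T : eqType) (R : seq T -> seq T -> Prop) :
  (forall s, R s s) -> (forall s t u, R s t -> R t u -> R s u) ->
  (forall x s t, R s t -> R (x :: s) (x :: t)) ->
  (forall x y s, R (x :: y :: s) (y :: x :: s)) ->
  forall s t, perm_eq s t -> R s t.
Proof.
move=> Rr Rt Rc Rs.
have Hmv : forall x t2 t1, R (x :: t1 ++ t2) (t1 ++ x :: t2).
  move=> x t2; elim=> [|y t1 IH] /=; first exact: Rr.
  exact: Rt (Rs _ _ _) (Rc _ _ _ IH).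
elim=> [|x s IH] t Hp.
  by have := perm_size Hp; case: t Hp => // _ _; apply: Rr.
have xt : x \in t by rewrite -(perm_mem Hp) mem_head.
case/splitPr: xt Hp => t1 t2 Hp.
apply: Rt (Hmv _ _ _); apply: Rc; apply: IH.
rewrite -(perm_cons x); apply: perm_trans Hp _; by rewrite (perm_catCA t1 [:: x] t2).
Qed.

Fixpoint ilv (e o : seq nat) : seq nat :=
  match e with
  | [::] => o
  | x :: e' => match o with [::] => e | y :: o' => x :: y :: ilv e' o' end
  end.

Lemma evens_cons2 (T : Type) (x y : T) s : evens [:: x, y & s] = x :: evens s.
Proof. by []. Qed.
Lemma odds_cons2 (T : Type) (x y : T) s : odds [:: x, y & s] = y :: odds s.
Proof. by []. Qed.

Lemma size_eo (T : Type) (w : seq T) :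
  size (odds w) <= size (evens w) <= (size (odds w)).+1.
Proof. by elim: w => [|x w IH] //=; rewrite ltnS andbC. Qed.

Lemma ilv_eo (w : seq nat) : ilv (evens w) (odds w) = w.
Proof.
move: {-1}(size w) (leqnn (size w)) => n; elim: n w => [|n IH] [|x [|y w]] //= H.
by rewrite IH // -ltnS ltnW.
Qed.

Lemma eo_ilv (e o : seq nat) : size o <= size e <= (size o).+1 ->
  evens (ilv e o) = e /\ odds (ilv e o) = o.
Proof.
elim: e o => [|x e IH] [|y o] //=.
  by case: e {IH}.
rewrite !ltnS => H; have [-> ->] := IH o H; done.
Qed.
Local Open Scope ring_scope.
Section S.
Variable D : idomainType.

Lemma scaleU (c a : D) (k : {fmonom var_t}) :
  c *: (<< a *g k >> : FA D) = << c * a *g k >>.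
Proof. by apply/malgP => k'; rewrite mcoeffZ !mcoeffU mulrnAr. Qed.

Lemma mulC_r (x : FA D) c : x * c%:MP = c *: x.
Proof.
rewrite [in LHS](monalgE x) [in RHS](monalgE x) mulr_suml scaler_sumr.
apply: eq_bigr => k _; rewrite malgM_def fgmulUU mulm1 scaleU mulrC //.
Qed.

Lemma scalerAr' (x y : FA D) c : x * (c *: y) = c *: (x * y).
Proof. by rewrite -mul_malgC mulrA mulC_r scalerAl. Qed.

Definition M (s : seq var_t) : FA D := mon D (FMonom s).

Lemma M_cat s t : M (s ++ t) = M s * M t.
Proof.
rewrite /M /mon malgM_def fgmulUU mulr1; congr << _ >>.
by apply/val_inj; rewrite /= fmM.
Qed.

Lemma M_nil : M [::] = 1.
Proof. rewrite /M /mon; congr << _ >>; apply/val_inj; by rewrite /= fm1. Qed.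

Lemma M_1 v : M [:: v] = xv D v.
Proof. by rewrite /xv /M fmuE. Qed.

Lemma Iid0 : Iid (0 : FA D).
Proof. by move=> J [[J0 _ _ _] _] _. Qed.

Lemma IidB a b : Iid a -> Iid b -> Iid (a - b :> FA D).
Proof. by move=> Ha Hb J HJ Hg; case: (HJ) => [[_ JB _ _] _]; apply: JB; [apply: Ha|apply: Hb]. Qed.

Lemma IidN a : Iid a -> Iid (- a :> FA D).
Proof. by move=> Ha; rewrite -sub0r; apply: IidB => //; apply: Iid0. Qed.

Lemma IidD a b : Iid a -> Iid b -> Iid (a + b :> FA D).
Proof. by move=> Ha Hb; rewrite -(opprK b); apply: IidB => //; apply: IidN. Qed.

Lemma IidMl a b : Iid b -> Iid (a * b :> FA D).
Proof. by move=> Hb J HJ Hg; case: (HJ) => [[_ _ JM _] _]; apply: JM; apply: Hb. Qed.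

Lemma IidMr a b : Iid a -> Iid (a * b :> FA D).
Proof. by move=> Ha J HJ Hg; case: (HJ) => [[_ _ _ JM] _]; apply: JM; apply: Ha. Qed.

Lemma IidZ c a : Iid a -> Iid (c *: a :> FA D).
Proof. by move=> Ha; rewrite -mul_malgC; apply: IidMl. Qed.

Lemma Iid_phi (phi : {lrmorphism FA D -> FA D}) q :
  (forall i, L0 (phi (yv D i))) -> (forall i, L1 (phi (zv D i))) ->
  gensI q -> Iid (phi q).
Proof.
move=> H0 H1 Hq J [HJ Hphi] Hg; exact: (Hphi phi H0 H1 q (Hg q Hq)).
Qed.

Definition ren (gy gz : nat -> nat) (v : var_t) : var_t :=
  match v with inl i => inl (gy i) | inr i => inr (gz i) end.

Section Ren.
Variables gy gz : nat -> nat.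
Definition fren (m : {fmonom var_t}) : {fmonom var_t} := FMonom (map (ren gy gz) m).
Definition hm (m : {fmonom var_t}) : FA D := mon D (fren m).

Lemma hm_mult : mmorphism hm.
Proof.
split.
  move=> x y; rewrite /hm /mon malgM_def fgmulUU mulr1; congr << _ >>.
  by apply/val_inj; rewrite /= !fmM map_cat.
rewrite /hm /mon; congr << _ >>; apply/val_inj; by rewrite /= !fm1.
Qed.

HB.instance Definition _ := isMultiplicative.Build _ _ hm hm_mult.

Definition substf (p : FA D) : FA D := mmap (@malgC _ D) hm p.

Lemma substf_add : additive substf.
Proof. exact: mmap_is_additive. Qed.
HB.instance Definition _ := GRing.isAdditive.Build _ _ substf substf_add.

Lemma substf_mul : multiplicative substf.
Proof.
apply: commr_mmap_is_multiplicative => g m m'.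
by rewrite /GRing.comm mulC_r mul_malgC.
Qed.
HB.instance Definition _ := GRing.isMultiplicative.Build _ _ substf substf_mul.

Lemma substf_scale : scalable substf.
Proof. by move=> c p; rewrite /substf mmapZ /= mul_malgC. Qed.
HB.instance Definition _ := GRing.isScalable.Build _ _ _ _ substf substf_scale.

Definition phiS : {lrmorphism FA D -> FA D} := substf.

Lemma phiS_xv v : substf (xv D v) = xv D (ren gy gz v).
Proof.
rewrite /substf /xv /mon mmapU [X in X * _](_ : _ = 1) ?mul1r; last exact: mpolyC1E. rewrite /hm /mon; congr << _ >>.
by apply/val_inj; rewrite /= !fmU.
Qed.
Lemma substfB a b : substf (a - b) = substf a - substf b.
Proof. exact: substf_add. Qed.
Lemma substfM a b : substf (a * b) = substf a * substf b.
Proof. exact: substf_mul.1. Qed.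
Lemma substfD a b : substf (a + b) = substf a + substf b.
Proof. exact: (raddfD phiS a b). Qed.
End Ren.

Lemma homog_xv v : homog (is_odd_var v) (xv D v).
Proof.
move=> m; rewrite /xv /mon mcoeffU; case: (fmu v =P m) => [<- _|_]; last by rewrite mulr0n eqxx.
by rewrite /zdeg fmU; case: v.
Qed.

Lemma L0_yv k : L0 (yv D k).
Proof. split; [exact: LG_var | exact: (homog_xv (inl k))]. Qed.

Lemma L1_zv k : L1 (zv D k).
Proof. split; [exact: LG_var | exact: (homog_xv (inr k))]. Qed.

Lemma Iid_ren gy gz q : gensI q -> Iid (substf gy gz q).
Proof.
apply: (Iid_phi (phiS gy gz)) => i.
  by rewrite [X in L0 X](_ : _ = yv D (gy i)); [apply: L0_yv | exact: (phiS_xv gy gz (inl i))].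
by rewrite [X in L1 X](_ : _ = zv D (gz i)); [apply: L1_zv | exact: (phiS_xv gy gz (inr i))].
Qed.

Lemma gen1 (R : pzRingType) (f : R -> R) (fB : forall a b, f (a - b) = f a - f b)
  (fM : forall a b, f (a * b) = f a * f b) (x y : R) :
  f (x * y - y * x) = f x * f y - f y * f x.
Proof. by rewrite fB !fM. Qed.

Lemma gen3 (R : pzRingType) (f : R -> R) (fB : forall a b, f (a - b) = f a - f b)
  (fM : forall a b, f (a * b) = f a * f b) (x y z : R) :
  f (x * y * z - z * y * x) = f x * f y * f z - f z * f y * f x.
Proof. by rewrite fB !fM. Qed.

Lemma gen2 (R : pzRingType) (f : R -> R) (fD : forall a b, f (a + b) = f a + f b)
  (fM : forall a b, f (a * b) = f a * f b) (x y : R) :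
  f (x * y + y * x) = f x * f y + f y * f x.
Proof. by rewrite fD !fM. Qed.

Lemma substf1 gy gz (x y : FA D) : substf gy gz (x * y - y * x) =
  substf gy gz x * substf gy gz y - substf gy gz y * substf gy gz x.
Proof. exact: gen1 (substfB gy gz) (substfM gy gz) x y. Qed.

Lemma substf3 gy gz (x y z : FA D) : substf gy gz (x * y * z - z * y * x) =
  substf gy gz x * substf gy gz y * substf gy gz z - substf gy gz z * substf gy gz y * substf gy gz x.
Proof. exact: gen3 (substfB gy gz) (substfM gy gz) x y z. Qed.

Lemma substf2 gy gz (x y : FA D) : substf gy gz (x * y + y * x) =
  substf gy gz x * substf gy gz y + substf gy gz y * substf gy gz x.
Proof. exact: gen2 (substfD gy gz) (substfM gy gz) x y. Qed.

Lemma G1 i j : Iid (yv D i * yv D j - yv D j * yv D i).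
Proof.
have := Iid_ren (fun n => if n == 0%N then i else j) id (yv D 0 * yv D 1 - yv D 1 * yv D 0) (Or31 _ _ erefl).
rewrite substf1 /yv !phiS_xv /ren /=. exact. Qed.


Lemma G2 a b c : Iid (zv D a * zv D b * zv D c - zv D c * zv D b * zv D a).
Proof.
have Hq : gensI (zv D 0 * zv D 1 * zv D 2 - zv D 2 * zv D 1 * zv D 0) by constructor 2.
have := Iid_ren id (fun n => if n == 0%N then a else if n == 1%N then b else c) _ Hq.
rewrite substf3 /zv !phiS_xv /ren /=. exact.
Qed.

Lemma G3 i a : Iid (yv D i * zv D a + zv D a * yv D i).
Proof.
have Hq : gensI (yv D 0 * zv D 0 + zv D 0 * yv D 0) by constructor 3.
have := Iid_ren (fun _ => i) (fun _ => a) _ Hq.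
rewrite substf2 /yv /zv !phiS_xv /ren /=. exact.
Qed.

Lemma gtrans (V : lmodType D) (a b e : V) c d :
  (a - c *: b) + c *: (b - d *: e) = a - (c * d) *: e.
Proof. by rewrite scalerBr scalerA addrA subrK. Qed.

Lemma gctx0 (R : lalgType D) (hr : forall (x y : R) c, x * (c *: y) = c *: (x * y))
  (x a b y : R) c :
  x * (a * y) - c *: (x * (b * y)) = x * (a - c *: b) * y.
Proof. by rewrite mulrBr mulrBl hr -scalerAl !mulrA. Qed.

Lemma gctx (x a b y : FA D) c :
  x * (a * y) - c *: (x * (b * y)) = x * (a - c *: b) * y.
Proof. exact: gctx0 (@scalerAr' ) x a b y c. Qed.

Definition W s t (c : D) := Iid (M s - c *: M t).

Lemma W_refl s : W s s 1.
Proof. rewrite /W scale1r subrr; exact: Iid0. Qed.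

Lemma W_trans s t u c d : W s t c -> W t u d -> W s u (c * d).
Proof. by move=> H1 H2; rewrite /W -(@gtrans _ (M s) (M t) (M u) c d); apply: IidD; [exact: H1 | apply: IidZ; exact: H2]. Qed.
Arguments W_trans {s t u c d}.


Lemma W_ctx u v s t c : W s t c -> W (u ++ s ++ v) (u ++ t ++ v) c.
Proof.
move=> H; rewrite /W !M_cat gctx.
apply: IidMr; apply: IidMl; exact: H.
Qed.
Arguments W_ctx u v {s t c}.


Lemma W_pre u s t c : W s t c -> W (u ++ s) (u ++ t) c.
Proof. move=> /(W_ctx u [::]); rewrite !cats0; exact. Qed.
Arguments W_pre u {s t c}.


Lemma W_suf v s t c : W s t c -> W (s ++ v) (t ++ v) c.
Proof. move=> /(W_ctx [::] v); exact. Qed.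
Arguments W_suf v {s t c}.


Lemma gA (V : lmodType D) (a b : V) : b + a = a - (-1) *: b.
Proof. by rewrite scaleN1r opprK addrC. Qed.

Lemma g1 (V : lmodType D) (a b : V) : a - b = a - 1 *: b.
Proof. by rewrite scale1r. Qed.

Lemma M2 x y : M [:: x; y] = xv D x * xv D y.
Proof. by rewrite -M_1 -M_1 -M_cat. Qed.

Lemma M3 x y z : M [:: x; y; z] = xv D x * xv D y * xv D z.
Proof. by rewrite -!M_1 -!M_cat. Qed.

Lemma W_A i a : W [:: inr a; inl i] [:: inl i; inr a] (-1).
Proof. rewrite /W !M2 -gA; exact: G3. Qed.

Lemma W_B i j : W [:: inl i; inl j] [:: inl j; inl i] 1.
Proof. rewrite /W !M2 -g1; exact: G1. Qed.

Lemma W_C a b c : W [:: inr a; inr b; inr c] [:: inr c; inr b; inr a] 1.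
Proof. rewrite /W !M3 -g1; exact: G2. Qed.

Definition Wp s t := forall u v, W (u ++ s ++ v) (u ++ t ++ v) 1.

Lemma Wp_refl s : Wp s s.
Proof. move=> u v; exact: W_refl. Qed.

Lemma Wp_trans s t w : Wp s t -> Wp t w -> Wp s w.
Proof.
move=> H1 H2 u v; rewrite -[X in W _ _ X](mulr1 1); exact: W_trans (H1 u v) (H2 u v).
Qed.
Arguments Wp_trans {s t w}.


Lemma Wp_ctx u0 v0 s t : Wp s t -> Wp (u0 ++ s ++ v0) (u0 ++ t ++ v0).
Proof.
move=> H u v; have := H (u ++ u0) (v0 ++ v); rewrite -!catA; exact.
Qed.
Arguments Wp_ctx u0 v0 {s t}.


Lemma Wp_pre u0 s t : Wp s t -> Wp (u0 ++ s) (u0 ++ t).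
Proof. move=> /(Wp_ctx u0 [::]); rewrite !cats0; exact. Qed.
Arguments Wp_pre u0 {s t}.


Lemma Wp_suf v0 s t : Wp s t -> Wp (s ++ v0) (t ++ v0).
Proof. move=> /(Wp_ctx [::] v0); exact. Qed.
Arguments Wp_suf v0 {s t}.


Lemma Wp_W s t : Wp s t -> W s t 1.
Proof. move=> H; have := H [::] [::]; rewrite /= !cats0; exact. Qed.

Lemma Wp_B i j : Wp [:: inl i; inl j] [:: inl j; inl i].
Proof. move=> u v; exact: W_ctx (W_B i j). Qed.

Lemma Wp_C a b c : Wp [:: inr a; inr b; inr c] [:: inr c; inr b; inr a].
Proof. move=> u v; exact: W_ctx (W_C a b c). Qed.

Lemma ymove (a : seq nat) z :
  W (inr z :: map inl a) (map inl a ++ [:: inr z]) ((-1) ^+ size a).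
Proof.
elim: a => [|i a IH] /=; first by rewrite expr0; exact: W_refl.
rewrite exprS; have H1 := W_ctx [::] (map inl a) (W_A i z).
have H2 := W_pre [:: inl i] IH.
rewrite /= in H1 H2. exact: W_trans H1 H2.
Qed.

Definition getl (v : var_t) : option nat := if v is inl i then Some i else None.
Definition getr (v : var_t) : option nat := if v is inr i then Some i else None.

Lemma sep w : exists c, W w (map inl (pmap getl w) ++ map inr (pmap getr w)) c.
Proof.
elim: w => [|v w [c IH]]; first by exists 1; exact: W_refl.
case: v => [i|a] /=.
  exists c; exact: (W_pre [:: inl i] IH).
exists (c * (-1) ^+ size (pmap getl w)).
apply: W_trans (W_pre [:: inr a] IH) _.
have := W_suf (map inr (pmap getr w)) (ymove (pmap getl w) a).
rewrite -catA; exact.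
Qed.

Lemma sortY (a : seq nat) : Wp (map inl a) (map inl (sort leq a)).
Proof.
apply: (@perm_gen _ (fun a b => Wp (map inl a) (map inl b))).
- move=> s; exact: Wp_refl.
- move=> s t u; exact: Wp_trans.
- move=> x s t H; exact: (Wp_pre [:: inl x] H).
- move=> x y s; exact: (Wp_ctx [::] (map inl s) (Wp_B x y)).
- by rewrite perm_sym perm_sort.
Qed.

Definition Re (e e' : seq nat) := size e = size e' /\
  forall o, (size e <= (size o).+1)%N -> Wp (map inr (ilv e o)) (map inr (ilv e' o)).

Lemma Re_perm e e' : perm_eq e e' -> Re e e'.
Proof.
apply: perm_gen.
- move=> s; split => // o _; exact: Wp_refl.
- move=> s t u [h1 H1] [h2 H2]; split; first by rewrite h1.
  move=> o Ho; apply: Wp_trans (H1 o Ho) (H2 o _); by rewrite -h1.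
- move=> x s t [h H]; split; first by rewrite /= h.
  case=> [|y o] /= Ho.
    move: Ho; rewrite ltnS leqn0 => /eqP/size0nil Es; subst s.
    move: h => /esym/size0nil ->; exact: Wp_refl.
  exact: (Wp_pre [:: inr x; inr y] (H o Ho)).
- move=> x y s; split => //; case=> [|a [|b o]] //= Ho;
  exact: (Wp_ctx [::] _ (Wp_C x a y)).
Qed.

Definition Ro (o o' : seq nat) := size o = size o' /\
  forall e, (size o <= size e)%N -> Wp (map inr (ilv e o)) (map inr (ilv e o')).

Lemma Ro_perm p p' : perm_eq p p' -> Ro p p'.
Proof.
apply: perm_gen.
- move=> s; split => // o _; exact: Wp_refl.
- move=> s t u [h1 H1] [h2 H2]; split; first by rewrite h1.
  move=> e He; apply: Wp_trans (H1 e He) (H2 e _); by rewrite -h1.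
- move=> x s t [h H]; split; first by rewrite /= h.
  case=> [|a e] //= He.
  exact: (Wp_pre [:: inr a; inr x] (H e He)).
- move=> x y s; split => //; case=> [|a [|b e]] //= He.
  exact: (Wp_ctx [:: inr a] _ (Wp_C x b y)).
Qed.

Definition nfw (w : seq var_t) : seq var_t :=
  map inl (sort leq (pmap getl w)) ++
  map inr (ilv (sort leq (evens (pmap getr w))) (sort leq (odds (pmap getr w)))).

Lemma nf_ok w : exists c, W w (nfw w) c.
Proof.
have [c H] := sep w.
set Y := pmap getl w in H *; set Z := pmap getr w in H *.
have H2 : Wp (map inl Y ++ map inr Z) (nfw w).
  apply: Wp_trans (Wp_suf (map inr Z) (sortY Y)) _.
  apply: Wp_pre; rewrite -[in X in Wp X _](ilv_eo Z).
  have [h1 h2] := andP (size_eo _ Z).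
  have p1 : perm_eq (evens Z) (sort leq (evens Z)) by rewrite perm_sym perm_sort.
  have p2 : perm_eq (odds Z) (sort leq (odds Z)) by rewrite perm_sym perm_sort.
  have K := (Re_perm _ _ p1).2 (odds Z) h2. apply: (Wp_trans K).
  apply: (Ro_perm _ _ p2).2.
  by rewrite size_sort.
exists (c * 1); exact: W_trans H (Wp_W _ _ H2).
Qed.

Lemma nf_inB w : inB (FMonom (nfw w)).
Proof.
set Z := pmap getr w.
exists (sort leq (pmap getl w)), (ilv (sort leq (evens Z)) (sort leq (odds Z))).
split; first by [].
have Hs : (size (sort leq (odds Z)) <= size (sort leq (evens Z)) <= (size (sort leq (odds Z))).+1)%N.
  by rewrite !size_sort size_eo.
have [E O] := @eo_ilv (sort leq (evens Z)) (sort leq (odds Z)) Hs.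
by rewrite E O !sort_sorted.
Qed.

Lemma gsum (V : lmodType D) (a b S1 S2 : V) f c :
  f *: a + S1 - ((f * c) *: b + S2) = f *: (a - c *: b) + (S1 - S2).
Proof. by rewrite scalerBr scalerA opprD addrACA. Qed.

Lemma sum_lemma (s : seq {fmonom var_t}) (f : {fmonom var_t} -> D) :
  exists r : seq (D * {fmonom var_t}),
    (forall t, t \in r -> inB t.2) /\
    Iid (\sum_(k <- s) f k *: mon D k - \sum_(t <- r) t.1 *: mon D t.2).
Proof.
elim: s => [|k s [r [Hr HI]]].
  exists [::]; split; first by [].
  rewrite !big_nil subr0; exact: Iid0.
have [c Hc] := nf_ok k.
exists ((f k * c, FMonom (nfw k)) :: r); split.
  move=> t; rewrite inE => /orP [/eqP -> | /Hr //]; exact: nf_inB.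
rewrite !big_cons gsum; apply: IidD; last exact: HI.
apply: IidZ; move: Hc; rewrite /W /M fmK; exact.
Qed.
End S.

Theorem mainTheorem3 (D : idomainType)
    (D_infinite : forall s : seq D, exists x : D, x \notin s) :
  forall p : FA D,
    exists r : seq (D * {fmonom var_t}),
      (forall t, t \in r -> inB t.2) /\
      Iid (p - \sum_(t <- r) t.1 *: mon D t.2)
    .
Proof.
move=> p.
have [r [Hr HI]] := @sum_lemma D (finmap.enum_fset (msupp p)) (fun k => p@_k).
exists r; split; first exact: Hr.
have E : p = \sum_(k <- finmap.enum_fset (msupp p)) p@_k *: mon D k.
  rewrite [in LHS](monalgE p); apply: eq_bigr => k _.
  by rewrite /mon scaleU mulr1.
rewrite [X in X - _]E; exact: HI.
Qed.
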